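(* Let $p$ be an odd prime and let $G=F\rtimes H$ be a metabelian Frobenius group with Frobenius kernel $F\cong C_p\times C_p$ and cyclic Frobenius complement $H$ of order $m$ dividing $p-1$, such that $G$ has exactly $p+1$ conjugacy classes of subgroups of order $p$. Let $Q_1=\{1\}$, let $Q_2,\dots,Q_{p+2}$ be the $p+1$ subgroups of order $p$ of $F$, and $Q_{p+3}=F$. Then: (a) $N_G(Q_v)=G$ and $N_G(Q_v)/Q_v=G/Q_v$ for every $1\le v\le p+3$; (b) for every $1\le v\le p+2$, $G/Q_v$ is a Frobenius group with Frobenius complement $HQ_v/Q_v\cong H$ and Frobenius kernel $F/Q_v$.
   Context: A Frobenius group with complement $H$: $1\ne H<G$ with $H\cap gHg^{-1}=1$ for all $g\in G\setminus H$; its Frobenius kernel $F=\{1\}\cup(G\setminus\bigcup_g gHg^{-1})$ is a normal subgroup with $G=F\rtimes H$. *)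

(* Defs.v *)
From mathcomp Require Import all_boot all_fingroup all_solvable.
Set Implicit Arguments. Unset Strict Implicit. Unset Printing Implicit Defensive.
Local Open Scope group_scope.

Definition num_conj_classes_subgroups_of_order (gT : finGroupType)
    (G : {set gT}) (n : nat) : nat :=
  #|[set K :^: G | K in [set K : {set gT} | [&& K \subset G, group_set K & #|K| == n]]]|.

(* Main.v *)
Require Import Defs.
From mathcomp Require Import all_boot all_fingroup all_solvable all_algebra.
Local Open Scope group_scope.

Lemma abelZp2 p : prime p -> p.-abelem [set: 'Z_p * 'Z_p].
Proof.
move=> pp; have p1 := prime_gt1 pp.
apply/abelemP => //; split.
  apply/centsP => [[a b]] _ [c d] _.
  by rewrite /commute; congr pair; apply: val_inj => /=; rewrite addnC.
move=> [a b] _.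
have E n (x : 'Z_p * 'Z_p) : x ^+ n = (x.1 ^+ n, x.2 ^+ n).
  elim: n => [|n IH]; first by [].
  by rewrite !expgS IH.
rewrite E /=.
have Z (y : 'Z_p) : y ^+ p = 1.
  rewrite FinRing.zmodXgE -GRing.mulr_natr pchar_Zp // GRing.mulr0.
  reflexivity.
by rewrite !Z.
Qed.

Theorem lemma5p2 (gT : finGroupType) (G F H : {group gT}) (p m : nat) :
  prime p -> odd p ->
  [Frobenius G = F ><| H] ->
  abelian G^`(1) ->
  F \isog [set: 'Z_p * 'Z_p] ->
  cyclic H -> #|H| = m -> (m %| p.-1)%N ->
  num_conj_classes_subgroups_of_order G p = p.+1 ->
  #|[set Q : {group gT} | Q \subset F & #|Q| == p]| = p.+1 /\
  (forall Q : {group gT},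
     Q :=: 1 \/ (Q \subset F /\ #|Q| = p) \/ Q :=: F ->
     'N_G(Q) = G /\ 'N_G(Q) / Q = G / Q) /\
  (forall Q : {group gT},
     Q :=: 1 \/ (Q \subset F /\ #|Q| = p) ->
     [Frobenius (G / Q) = (F / Q) ><| ((H <*> Q) / Q)] /\ (H <*> Q) / Q \isog H).
Proof.
move=> pp oddp frobG _ isoF _ oH _ ncl.
have p1 := prime_gt1 pp.
have [defG ntF ntH ltFG ltHG] := Frobenius_context frobG.
have [nsFG sHG mulFH nFH tiFH] := sdprod_context defG.
have sFG := normal_sub nsFG.
have oF : #|F| = (p ^ 2)%N.
  by rewrite (card_isog isoF) cardsT card_prod card_ord Zp_cast // mulnn.
have abF : p.-abelem F by rewrite (isog_abelem isoF) abelZp2.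
have EF : F \in 'E_p^2(F).
  by apply/pnElemP; split => //; rewrite oF pfactorK.
have cE := card_p1Elem_p2Elem EF.
have Edef : [set Q : {group gT} | Q \subset F & #|Q| == p] = 'E_p^1(F).
  by rewrite p1ElemE //; apply/setP => Q; rewrite !inE.
rewrite /num_conj_classes_subgroups_of_order in ncl.
set S := [set K : {set gT} | [&& K \subset G, group_set K & #|K| == p]] in ncl.
have hallF : \pi(F).-Hall(G) F by apply: Hall_pi; apply: Frobenius_ker_Hall frobG.
have SsubF : forall K : {group gT}, K \subset G -> #|K| = p -> K \in 'E_p^1(F).
  move=> K sKG oK; rewrite p1ElemE // !inE oK eqxx andbT.
  rewrite (sub_normal_Hall hallF nsFG sKG) /pgroup oK pnatE // mem_primes pp.
  have pF : p %| #|F| by rewrite oF expnS dvdn_mulr.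
  have h : (0 < #|F|) && (p %| #|F|) by rewrite cardG_gt0 pF.
  exact: h.
have leS : #|S| <= p.+1.
  rewrite -cE.
  apply: leq_trans (leq_imset_card (fun X : {group gT} => gval X) _).
  apply: subset_leq_card; apply/subsetP => K; rewrite inE => /and3P[sKG gK /eqP oK].
  by apply/imsetP; exists (Group gK); first by apply: SsubF.
have inj : {in S &, injective (fun K => K :^: G)}.
  apply/imset_injP; rewrite eqn_leq leq_imset_card /= ncl.
  exact: leS.
have normQ : forall Q : {group gT}, Q \subset F -> #|Q| = p -> G \subset 'N(Q).
  move=> Q sQF oQ.
  have QS : gval Q \in S by rewrite inE (subset_trans sQF sFG) groupP oQ eqxx.
  apply/subsetP => g Gg.
  have QgS : Q :^ g \in S.
    rewrite inE -{1}(conjGid Gg) conjSg (subset_trans sQF sFG) cardJg oQ eqxx.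
    by rewrite (groupP (Q :^ g)%G).
  have := inj _ _ QgS QS; rewrite /= conjugates_conj lcoset_id // => /(_ erefl) QJ.
  by rewrite inE QJ subxx.
split; first by rewrite Edef cE.
split.
  move=> Q HQ.
  suff NQ : 'N_G(Q) = G by split; rewrite ?NQ.
  apply/setIidPl; case: HQ => [Q1 | [[sQF oQ] | QF]].
  - by rewrite Q1 norm1 subsetT.
  - exact: normQ.
  - by rewrite QF; exact: normal_norm nsFG.
move=> Q HQ.
have [sQF nQG] : Q \subset F /\ G \subset 'N(Q).
  case: HQ => [Q1 | [sQF oQ]]; first by rewrite Q1 sub1G norm1 subsetT.
  by split; [ | apply: normQ].
have nQH := subset_trans sHG nQG.
rewrite quotientYidr //.
have tiHQ : Q :&: H = 1 by apply/trivgP; rewrite -tiFH setSI.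
split; last by rewrite isog_sym; exact: quotient_isog.
apply: Frobenius_coprime_quotient defG _ _ _.
- by rewrite /normal (subset_trans sQF sFG) nQG.
- by split; [exact: Frobenius_coprime frobG | exact: ntH].
split.
  case: HQ => [Q1 | [_ oQ]]; first by rewrite Q1 proper1G ntF.
  rewrite properEcard sQF oQ oF.
  by rewrite -{1}(expn1 p) ltn_exp2l.
by move=> x Hx; rewrite (Frobenius_reg_ker frobG Hx) sub1G.
Qed.
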